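(* Let $\vec\kappa=(\kappa_0,\kappa_1,\kappa_\infty,\theta_1,\ldots,\theta_N)$ and $R_\tau(\vec\kappa)=(1-\kappa_0,1-\kappa_1,-\kappa_\infty,-\theta_1,\ldots,-\theta_N)$. Define the birational transformation $R_\tau:(q,p)\mapsto(Q,P)$ by $$Q_i=\frac{s_ip_i(q_ip_i-\theta_i)}{(\alpha+\sum_jq_jp_j)(\alpha+\kappa_\infty+\sum_jq_jp_j)},\qquad Q_iP_i=-q_ip_i\quad(i=1,\dots,N),$$ with $\alpha=\alpha(\vec\kappa)$, and put $\widetilde H_i=H_i(q,p,s;\vec\kappa)-\dfrac{q_ip_i}{s_i}$. Then (i) $\sum_i\big(dp_i\wedge dq_i-dH_i\wedge ds_i\big)=\sum_i\big(dP_i\wedge dQ_i-d\widetilde H_i\wedge ds_i\big)$ as 2-forms in the variables $(q,p,s)$, where $H_i=H_i(q,p,s;\vec\kappa)$; (ii) $\widetilde H_i=H_i(Q,P,s;R_\tau(\vec\kappa))$ for $i=1,\dots,N$. Thus $R_\tau$ is a birational canonical transformation from $\mathcal H_N(q,p,s,H;\vec\kappa)$ to $\mathcal H_N(Q,P,s,\widetilde H;R_\tau(\vec\kappa))$, and in particular it maps solutions of $\mathcal H_N(\vec\kappa)$ to solutions of $\mathcal H_N(R_\tau(\vec\kappa))$.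
   Context: For $\vec\kappa=(\kappa_0,\kappa_1,\kappa_\infty,\theta_1,\ldots,\theta_N)\in\mathbb C^{N+3}$ put $\alpha=\alpha(\vec\kappa)=-\frac12(\kappa_0+\kappa_1+\kappa_\infty+\sum_{i=1}^N\theta_i-1)$, $R_{ij}=s_i(s_j-1)/(s_j-s_i)$, $S_{ij}=s_i(s_i-1)/(s_i-s_j)$. Define $H_i=H_i(q,p,s;\vec\kappa)$, $i=1,\dots,N$, by $s_i(s_i-1)H_i=q_i(\alpha+\sum_j q_jp_j)(\alpha+\kappa_\infty+\sum_j q_jp_j)+s_ip_i(q_ip_i-\theta_i)-\sum_{j\neq i}R_{ji}(q_jp_j-\theta_j)q_ip_j-\sum_{j\neq i}S_{ij}(q_ip_i-\theta_i)q_jp_i-\sum_{j\neq i}R_{ij}q_jp_j(q_ip_i-\theta_i)-\sum_{j\neq i}R_{ij}q_ip_i(q_jp_j-\theta_j)-(s_i+1)(q_ip_i-\theta_i)q_ip_i+(\kappa_1s_i+\kappa_0-1)q_ip_i$, where $\sum_j$ runs over $j=1,\dots,N$ and $\sum_{j\ne i}$ omits $j=i$. The Garnier system $\mathcal H_N(\vec\kappa)$ is the Hamiltonian system $\partial q_i/\partial s_j=\partial H_j/\partial p_i$, $\partial p_i/\partial s_j=-\partial H_j/\partial q_i$ ($i,j=1,\dots,N$) for functions $q_i(s),p_i(s)$ of $s=(s_1,\dots,s_N)$. *)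

(* Defs.v *)
From HB Require Import structures.
From mathcomp Require Import all_boot all_order all_algebra.
From mathcomp Require Import all_classical all_reals topology normedtype derive.
From mathcomp Require Export complex.
Set Implicit Arguments.
Unset Strict Implicit.
Unset Printing Implicit Defensive.
Import Order.TTheory GRing.Theory Num.Theory.
Import numFieldNormedType.Exports.
Local Open Scope ring_scope.

Section Garnier.
Variables (K : fieldType) (N : nat).
Variables (k0 k1 kinf : K) (th : 'I_N -> K).

Definition galpha : K := - (2%:R^-1 * (k0 + k1 + kinf + \sum_(i < N) th i - 1)).

Variables (q p s : 'I_N -> K).

Definition sqp : K := \sum_(j < N) q j * p j.

Definition Rg (i j : 'I_N) : K := s i * (s j - 1) / (s j - s i).
Definition Sg (i j : 'I_N) : K := s i * (s i - 1) / (s i - s j).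

Definition hnum (i : 'I_N) : K :=
  q i * (galpha + sqp) * (galpha + kinf + sqp)
  + s i * p i * (q i * p i - th i)
  - \sum_(j < N | j != i) Rg j i * (q j * p j - th j) * q i * p j
  - \sum_(j < N | j != i) Sg i j * (q i * p i - th i) * q j * p i
  - \sum_(j < N | j != i) Rg i j * q j * p j * (q i * p i - th i)
  - \sum_(j < N | j != i) Rg i j * q i * p i * (q j * p j - th j)
  - (s i + 1) * (q i * p i - th i) * q i * p i
  + (k1 * s i + k0 - 1) * q i * p i.

Definition Ham (i : 'I_N) : K := hnum i / (s i * (s i - 1)).

Definition Qtau (i : 'I_N) : K :=
  s i * p i * (q i * p i - th i) / ((galpha + sqp) * (galpha + kinf + sqp)).
Definition Ptau (i : 'I_N) : K := - (q i * p i) / Qtau i.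

Definition Htilde (i : 'I_N) : K := Ham i - q i * p i / s i.
End Garnier.

(* Points of the (q,p,s)-space: x c j, with c = 0 (q), 1 (p), 2 (s). *)
Definition cq : 'I_3 := @Ordinal 3 0 isT.
Definition cp : 'I_3 := @Ordinal 3 1 isT.
Definition cs : 'I_3 := @Ordinal 3 2 isT.

Section Forms.
Variables (K : numFieldType) (N : nat).
Definition pt := 'I_3 -> 'I_N -> K.

Definition xq (x : pt) : 'I_N -> K := x cq.
Definition xp (x : pt) : 'I_N -> K := x cp.
Definition xs (x : pt) : 'I_N -> K := x cs.

Definition upd (x : pt) (c : 'I_3) (j : 'I_N) (t : K) : pt :=
  fun c' j' => if (c' == c) && (j' == j) then t else x c' j'.

Definition partial (F : pt -> K) (c : 'I_3) (j : 'I_N) (x : pt) : K :=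
  derive1 (fun t : K^o => (F (upd x c j t) : K^o)) (x c j).

(* (dF /\ dG) evaluated on the coordinate vectors e_(c,j), e_(d,k), at x *)
Definition wedge (F G : pt -> K) (c : 'I_3) (j : 'I_N) (d : 'I_3) (k : 'I_N)
    (x : pt) : K :=
  partial F c j x * partial G d k x - partial F d k x * partial G c j x.
End Forms.

(* Main.v *)
Require Import Defs.
From HB Require Import structures.
From mathcomp Require Import all_boot all_order all_algebra.
From mathcomp Require Import all_classical all_reals topology normedtype derive.
From mathcomp Require Import complex.
From mathcomp Require Import ring.
Import Order.TTheory GRing.Theory Num.Theory.
Import numFieldNormedType.Exports.
Local Open Scope ring_scope.

Set Implicit Arguments. Unset Strict Implicit.


Section DV.
Variables (K : numFieldType) (N : nat) (x : pt K N) (c : 'I_3) (j : 'I_N).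

Definition gl (F : pt K N -> K) := fun t : K^o => (F (upd x c j t) : K^o).
Definition dv F := derivable (gl F) (x c j) 1.
Definition Dv F := 'D_1 (gl F) (x c j).

Lemma upd_id : upd x c j (x c j) = x.
Proof.
apply/funext => c'; apply/funext => j'; rewrite /upd.
by case: eqP => [->|] //=; case: eqP => [->|].
Qed.

Lemma glx F : gl F (x c j) = F x.
Proof. by rewrite /gl upd_id. Qed.

Lemma partialE F : partial F c j x = Dv F.
Proof. by rewrite /partial derive1E. Qed.

Lemma dvD F G : dv F -> dv G -> dv (fun y => F y + G y).
Proof. move=> hF hG; exact: (derivableD hF hG). Qed.
Lemma DvD F G : dv F -> dv G -> Dv (fun y => F y + G y) = Dv F + Dv G.
Proof. move=> hF hG; exact: (deriveD hF hG). Qed.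
Lemma dvN F : dv F -> dv (fun y => - F y).
Proof. move=> hF; exact: (derivableN hF). Qed.
Lemma DvN F : dv F -> Dv (fun y => - F y) = - Dv F.
Proof. move=> hF; exact: (deriveN hF). Qed.
Lemma dvB F G : dv F -> dv G -> dv (fun y => F y - G y).
Proof. move=> hF hG; exact: (derivableB hF hG). Qed.
Lemma DvB F G : dv F -> dv G -> Dv (fun y => F y - G y) = Dv F - Dv G.
Proof. move=> hF hG; exact: (deriveB hF hG). Qed.
Lemma dvM F G : dv F -> dv G -> dv (fun y => F y * G y).
Proof. move=> hF hG; exact: (derivableM hF hG). Qed.
Lemma DvM F G : dv F -> dv G -> Dv (fun y => F y * G y) = F x * Dv G + G x * Dv F.
Proof. move=> hF hG; rewrite -!glx; exact: (deriveM hF hG). Qed.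
Lemma dvV F : F x != 0 -> dv F -> dv (fun y => (F y)^-1).
Proof. move=> h0 hF; rewrite -glx in h0; exact: (derivableV h0 hF). Qed.
Lemma DvV F : F x != 0 -> dv F -> Dv (fun y => (F y)^-1) = - (F x)^-2 * Dv F.
Proof. move=> h0 hF; rewrite -glx in h0 *; exact: (deriveV h0 hF). Qed.
Lemma dvC a : dv (fun _ => a).
Proof. exact: derivable_cst. Qed.
Lemma DvC a : Dv (fun _ => a) = 0.
Proof. exact: derive_cst. Qed.
Lemma dvX c' j' : dv (fun y => y c' j').
Proof.
rewrite /dv /gl /upd; case: ((c' == c) && (j' == j)).
  exact: derivable_id.
exact: derivable_cst.
Qed.

Lemma dv_sum (I : eqType) (r : seq I) (P : pred I) (F : I -> pt K N -> K) :
  (forall i, P i -> dv (F i)) -> dv (fun y => \sum_(i <- r | P i) F i y).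
Proof.
move=> h; elim: r => [|a r IH].
  rewrite (_ : (fun y => _) = (fun _ => 0)); first exact: dvC.
  by apply/funext => y; rewrite big_nil.
case: (boolP (P a)) => Pa.
  rewrite (_ : (fun y => _) = (fun y => F a y + \sum_(i <- r | P i) F i y)).
    exact: (dvD (h a Pa) IH).
  by apply/funext => y; rewrite big_cons Pa.
rewrite (_ : (fun y => _) = (fun y => \sum_(i <- r | P i) F i y)) //.
by apply/funext => y; rewrite big_cons (negbTE Pa).
Qed.

Lemma Dv_sum (I : eqType) (r : seq I) (P : pred I) (F : I -> pt K N -> K) :
  (forall i, P i -> dv (F i)) ->
  Dv (fun y => \sum_(i <- r | P i) F i y) = \sum_(i <- r | P i) Dv (F i).
Proof.
move=> h; elim: r => [|a r IH].
  rewrite big_nil (_ : (fun y => _) = (fun _ => 0)); first exact: DvC.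
  by apply/funext => y; rewrite big_nil.
case: (boolP (P a)) => Pa.
  rewrite big_cons Pa (_ : (fun y => _) = (fun y => F a y + \sum_(i <- r | P i) F i y)).
    by rewrite -IH; exact: (DvD (h a Pa) (dv_sum (r:=r) h)).
  by apply/funext => y; rewrite big_cons Pa.
rewrite big_cons (negbTE Pa) (_ : (fun y => _) = (fun y => \sum_(i <- r | P i) F i y)) //.
by apply/funext => y; rewrite big_cons (negbTE Pa).
Qed.

Definition hasD F v := dv F /\ Dv F = v.
Lemma hD_M F G a b : hasD F a -> hasD G b ->
  hasD (fun y => F y * G y) (F x * b + G x * a).
Proof. by move=> [hF eF] [hG eG]; split; [exact: dvM|rewrite DvM // eF eG]. Qed.
Lemma hD_D F G a b : hasD F a -> hasD G b -> hasD (fun y => F y + G y) (a + b).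
Proof. by move=> [hF eF] [hG eG]; split; [exact: dvD|rewrite DvD // eF eG]. Qed.
Lemma hD_N F a : hasD F a -> hasD (fun y => - F y) (- a).
Proof. by move=> [hF eF]; split; [exact: dvN|rewrite DvN // eF]. Qed.
Lemma hD_V F a : F x != 0 -> hasD F a -> hasD (fun y => (F y)^-1) (- (F x)^-2 * a).
Proof. by move=> h0 [hF eF]; split; [exact: dvV|rewrite DvV // eF]. Qed.
Lemma hD_C a : hasD (fun _ => a) 0.
Proof. by split; [exact: dvC|exact: DvC]. Qed.
Lemma hD_atom F : dv F -> hasD F (Dv F).
Proof. by []. Qed.
Lemma hD_ext F v w : hasD F v -> v = w -> hasD F w.
Proof. by move=> h <-. Qed.
End DV.


Set Default Proof Using "All".
Section Dir.
Variables (K : numFieldType) (N : nat) (k0 k1 kinf : K) (th : 'I_N -> K).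
Variables (x : pt K N) (c : 'I_3) (j : 'I_N).
Hypothesis s0 : forall i, xs x i != 0.
Hypothesis s1 : forall i, xs x i != 1.
Hypothesis sd : forall i j, i != j -> xs x i != xs x j.
Hypothesis hA : galpha k0 k1 kinf th + sqp (xq x) (xp x) != 0.
Hypothesis hB : galpha k0 k1 kinf th + kinf + sqp (xq x) (xp x) != 0.
Hypothesis p0 : forall i, xp x i != 0.
Hypothesis uth : forall i, xq x i * xp x i != th i.


Ltac dvt := repeat match goal with
 | |- dv _ _ _ (fun _ => ?a) => apply: dvC
 | |- dv _ _ _ (fun y => xq y _) => apply: dvX
 | |- dv _ _ _ (fun y => xp y _) => apply: dvX
 | |- dv _ _ _ (fun y => xs y _) => apply: dvX
 | |- dv _ _ _ (fun y => _ * _) => apply: dvM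
 | |- dv _ _ _ (fun y => _ + _) => apply: dvD
 | |- dv _ _ _ (fun y => - _) => apply: dvN
 | |- dv _ _ _ (fun y => (_)^-1) => apply: dvV
 | |- dv _ _ _ (fun y => \sum_(_ <- _ | _) _) => apply: dv_sum
 | |- dv _ _ _ (fun y => sqp _ _) => rewrite /sqp
 | |- forall _, _ => intros
 end.

Lemma dvHam i : dv x c j (fun y => Ham k0 k1 kinf th (xq y) (xp y) (xs y) i).
Proof.
rewrite /Ham /hnum /Rg /Sg.
dvt.
all: try by rewrite mulf_neq0 ?subr_eq0.
all: rewrite subr_eq0; apply: sd; by rewrite // eq_sym.
Qed.

Lemma dvS : dv x c j (fun y => sqp (xq y) (xp y)).
Proof. dvt. Qed.

Let qi i := xq x i.
Let pi i := xp x i.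
Let si i := xs x i.
Let al := galpha k0 k1 kinf th.
Let S := sqp (xq x) (xp x).
Let dq i := Dv x c j (fun y => xq y i).
Let dp i := Dv x c j (fun y => xp y i).
Let ds i := Dv x c j (fun y => xs y i).
Let dS := Dv x c j (fun y => sqp (xq y) (xp y)).

Ltac hdt := repeat match goal with
 | |- hasD _ _ _ (fun _ => ?a) _ => apply: hD_C
 | |- hasD _ _ _ (fun y => xq y _) _ => apply: hD_atom; apply: dvX
 | |- hasD _ _ _ (fun y => xp y _) _ => apply: hD_atom; apply: dvX
 | |- hasD _ _ _ (fun y => xs y _) _ => apply: hD_atom; apply: dvX
 | |- hasD _ _ _ (fun y => sqp _ _) _ => apply: hD_atom; apply: dvS
 | |- hasD _ _ _ (fun y => _ * _) _ => apply: hD_M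
 | |- hasD _ _ _ (fun y => _ + _) _ => apply: hD_D
 | |- hasD _ _ _ (fun y => - _) _ => apply: hD_N
 | |- hasD _ _ _ (fun y => (_)^-1) _ => apply: hD_V
 end.

Definition vQ i :=
  let u := qi i * pi i in let du := pi i * dq i + qi i * dp i in
  let num := si i * pi i * (u - th i) in
  let den := (al + S) * (al + kinf + S) in
  let dnum := ds i * pi i * (u - th i) + si i * dp i * (u - th i) + si i * pi i * du in
  let dden := dS * (al + kinf + S) + (al + S) * dS in
  (dnum * den - num * dden) / den ^+ 2.

Lemma hasDQ i : hasD x c j (fun y => Qtau k0 k1 kinf th (xq y) (xp y) (xs y) i) (vQ i).
Proof.
rewrite /Qtau; apply: hD_ext; first hdt.
  by rewrite /= mulf_neq0.
rewrite /= /vQ /qi /pi /si /al /S /dq /dp /ds /dS.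
field.
by apply/andP; split; [exact: hB | exact: hA].
Qed.

Lemma Qx0 i : Qtau k0 k1 kinf th (xq x) (xp x) (xs x) i != 0.
Proof. by rewrite /Qtau mulf_neq0 ?invr_eq0 ?mulf_neq0 ?subr_eq0. Qed.

Definition vP i :=
  let u := qi i * pi i in let du := pi i * dq i + qi i * dp i in
  let Q := Qtau k0 k1 kinf th (xq x) (xp x) (xs x) i in
  - (du * Q - u * vQ i) / Q ^+ 2.

Lemma hasDP i : hasD x c j (fun y => Ptau k0 k1 kinf th (xq y) (xp y) (xs y) i) (vP i).
Proof.
rewrite /Ptau; apply: hD_ext.
  apply: hD_M; first by hdt.
  apply: hD_V; first exact: Qx0.
  exact: hasDQ.
rewrite /= /vP /qi /pi /dq /dp.
have := Qx0 i.
move: (Qtau _ _ _ _ _ _ _ i) (vQ i) => Q vq HQ.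
field.
by [].
Qed.

Definition dH i := Dv x c j (fun y => Ham k0 k1 kinf th (xq y) (xp y) (xs y) i).

Lemma hasDHt i : hasD x c j (fun y => Htilde k0 k1 kinf th (xq y) (xp y) (xs y) i)
  (dH i - ((pi i * dq i + qi i * dp i) * si i - qi i * pi i * ds i) / si i ^+ 2).
Proof.
rewrite /Htilde; apply: hD_ext.
  apply: hD_D; first by apply: hD_atom; apply: dvHam.
  by hdt.
rewrite /= /dH /qi /pi /si /dq /dp /ds.
have := s0 i.
move: (xs x i) => si0 Hs.
field.
by [].
Qed.

Lemma dS_sum : dS = \sum_(i < N) (pi i * dq i + qi i * dp i).
Proof.
rewrite /dS /sqp Dv_sum; last by move=> i _; apply: dvM; apply: dvX.
apply: eq_bigr => i _; rewrite DvM; try apply: dvX.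
by rewrite addrC.
Qed.
End Dir.


Lemma part1 (K : numFieldType) (N : nat)
    (k0 k1 kinf : K) (th : 'I_N -> K) (x : pt K N) :
  (forall i, xs x i != 0) ->
  (forall i, xs x i != 1) ->
  (forall i j, i != j -> xs x i != xs x j) ->
  galpha k0 k1 kinf th + sqp (xq x) (xp x) != 0 ->
  galpha k0 k1 kinf th + kinf + sqp (xq x) (xp x) != 0 ->
  (forall i, xp x i != 0) ->
  (forall i, xq x i * xp x i != th i) ->
  (forall (c : 'I_3) (j : 'I_N) (d : 'I_3) (k : 'I_N),
     \sum_(i < N)
        (wedge (fun y => xp y i) (fun y => xq y i) c j d k x
         - wedge (fun y => Ham k0 k1 kinf th (xq y) (xp y) (xs y) i)
                 (fun y => xs y i) c j d k x)
   = \sum_(i < N)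
        (wedge (fun y => Ptau k0 k1 kinf th (xq y) (xp y) (xs y) i)
               (fun y => Qtau k0 k1 kinf th (xq y) (xp y) (xs y) i) c j d k x
         - wedge (fun y => Htilde k0 k1 kinf th (xq y) (xp y) (xs y) i)
                 (fun y => xs y i) c j d k x)).
Proof.
move=> hs0 hs1 hsd hA hB hp0 huth c j d k.
set cc := (galpha k0 k1 kinf th + sqp (xq x) (xp x))^-1
        + (galpha k0 k1 kinf th + kinf + sqp (xq x) (xp x))^-1.
pose w (i : 'I_N) := (xp x i * Dv x c j (fun y => xq y i) + xq x i * Dv x c j (fun y => xp y i))
              * Dv x d k (fun y => sqp (xq y) (xp y))
          - (xp x i * Dv x d k (fun y => xq y i) + xq x i * Dv x d k (fun y => xp y i))
              * Dv x c j (fun y => sqp (xq y) (xp y)).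
have E : forall i : 'I_N,
  Dv x c j (fun y => Ptau k0 k1 kinf th (xq y) (xp y) (xs y) i) *
  Dv x d k (fun y => Qtau k0 k1 kinf th (xq y) (xp y) (xs y) i) -
  Dv x d k (fun y => Ptau k0 k1 kinf th (xq y) (xp y) (xs y) i) *
  Dv x c j (fun y => Qtau k0 k1 kinf th (xq y) (xp y) (xs y) i) -
  (Dv x c j (fun y => Htilde k0 k1 kinf th (xq y) (xp y) (xs y) i) *
   Dv x d k (fun y => xs y i) -
   Dv x d k (fun y => Htilde k0 k1 kinf th (xq y) (xp y) (xs y) i) *
   Dv x c j (fun y => xs y i))
  = Dv x c j (fun y => xp y i) * Dv x d k (fun y => xq y i) -
    Dv x d k (fun y => xp y i) * Dv x c j (fun y => xq y i) -
    (Dv x c j (fun y => Ham k0 k1 kinf th (xq y) (xp y) (xs y) i) * Dv x d k (fun y => xs y i) -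
     Dv x d k (fun y => Ham k0 k1 kinf th (xq y) (xp y) (xs y) i) * Dv x c j (fun y => xs y i))
    + cc * w i.
  move=> i.
  rewrite (proj2 (@hasDP _ _ k0 k1 kinf th x c j hs0 hs1 hsd hA hB hp0 huth i)).
  rewrite (proj2 (@hasDP _ _ k0 k1 kinf th x d k hs0 hs1 hsd hA hB hp0 huth i)).
  rewrite (proj2 (@hasDQ _ _ k0 k1 kinf th x c j hs0 hs1 hsd hA hB hp0 huth i)).
  rewrite (proj2 (@hasDQ _ _ k0 k1 kinf th x d k hs0 hs1 hsd hA hB hp0 huth i)).
  rewrite (proj2 (@hasDHt _ _ k0 k1 kinf th x c j hs0 hs1 hsd hA hB hp0 huth i)).
  rewrite (proj2 (@hasDHt _ _ k0 k1 kinf th x d k hs0 hs1 hsd hA hB hp0 huth i)).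
  rewrite /vP /vQ /dH /Qtau /w /cc /=.
  move: (galpha k0 k1 kinf th) (sqp (xq x) (xp x)) hA hB => al S hA' hB'.
  have hu := huth i; have hp := hp0 i; have hs := hs0 i.
  rewrite -subr_eq0 in hu.
  move: (xq x i) (xp x i) (xs x i) hu hp hs => q p s hu hp hs.
  field.
  by rewrite hB' hA' hs hu hp.
symmetry.
under eq_bigr => i _. rewrite /wedge !partialE E. over.
symmetry.
have Hw : \sum_(i < N) cc * w i = 0.
  rewrite -mulr_sumr /w sumrB -!mulr_suml.
  rewrite -(@dS_sum _ _ k0 k1 kinf th x c j hs0 hs1 hsd hA hB hp0 huth).
  rewrite -(@dS_sum _ _ k0 k1 kinf th x d k hs0 hs1 hsd hA hB hp0 huth).
  ring.
rewrite [RHS]big_split /= Hw addr0.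
by apply: eq_bigr => i _; rewrite /wedge !partialE.
Qed.


Lemma part2 (K : numFieldType) (N : nat)
    (k0 k1 kinf : K) (th : 'I_N -> K) (x : pt K N) :
  (forall i, xs x i != 0) ->
  (forall i, xs x i != 1) ->
  (forall i j, i != j -> xs x i != xs x j) ->
  galpha k0 k1 kinf th + sqp (xq x) (xp x) != 0 ->
  galpha k0 k1 kinf th + kinf + sqp (xq x) (xp x) != 0 ->
  (forall i, xp x i != 0) ->
  (forall i, xq x i * xp x i != th i) ->
  (forall i : 'I_N,
     Htilde k0 k1 kinf th (xq x) (xp x) (xs x) i
     = Ham (1 - k0) (1 - k1) (- kinf) (fun j => - th j)
           (Qtau k0 k1 kinf th (xq x) (xp x) (xs x))
           (Ptau k0 k1 kinf th (xq x) (xp x) (xs x)) (xs x) i).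
Proof.
move=> hs0 hs1 hsd hA hB hp0 huth i.
have al' : galpha (1 - k0) (1 - k1) (- kinf) (fun j => - th j) = - galpha k0 k1 kinf th.
  rewrite /galpha sumrN; ring.
move: (xq x) (xp x) (xs x) hs0 hs1 hsd hA hB hp0 huth => q p s hs0 hs1 hsd hA hB hp0 huth.
have Qnz : forall j, Qtau k0 k1 kinf th q p s j != 0.
  by move=> j; rewrite /Qtau mulf_neq0 ?invr_eq0 ?mulf_neq0 ?subr_eq0.
have QP : forall j, Qtau k0 k1 kinf th q p s j * Ptau k0 k1 kinf th q p s j = - (q j * p j).
  move=> j; rewrite /Ptau mulrC -mulrA mulVf ?mulr1 //.
have sq' : sqp (Qtau k0 k1 kinf th q p s) (Ptau k0 k1 kinf th q p s) = - sqp q p.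
  by rewrite /sqp -sumrN; apply: eq_bigr => j _; rewrite QP.
rewrite /Htilde /Ham /hnum al' sq'.
set Q := Qtau k0 k1 kinf th q p s; set P := Ptau k0 k1 kinf th q p s.
have hsij : forall j, j != i -> s i - s j != 0.
  by move=> j hj; rewrite subr_eq0 hsd // eq_sym.
have hsji : forall j, j != i -> s j - s i != 0.
  by move=> j hj; rewrite subr_eq0 hsd.
have hu : forall j, q j * p j - th j != 0 by move=> j; rewrite subr_eq0.
have e1 : \sum_(j < N | j != i) Rg s j i * (Q j * P j - - th j) * Q i * P j
        = \sum_(j < N | j != i) Sg s i j * (q i * p i - th i) * q j * p i.
  apply: eq_bigr => j hj; rewrite /Q /P /Ptau /Qtau /Rg /Sg.
  move: (galpha k0 k1 kinf th) (sqp q p) hA hB => al S hA' hB'.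
  have := hsij j hj; have := hsji j hj; have := hu j; have := hu i.
  have := hs0 j; have := hs0 i; have := hp0 j; have := hp0 i.
  move: (q i) (q j) (p i) (p j) (s i) (s j) (th i) (th j) => qi qj pi pj si sj ti tj.
  move=> Hpi Hpj Hsi Hsj Hui Huj Hsji Hsij.
  field.
  by rewrite ?Hpi ?Hpj ?Hsi ?Hsj ?Hui ?Huj ?Hsji ?Hsij ?hA' ?hB'.
have e2 : \sum_(j < N | j != i) Sg s i j * (Q i * P i - - th i) * Q j * P i
        = \sum_(j < N | j != i) Rg s j i * (q j * p j - th j) * q i * p j.
  apply: eq_bigr => j hj; rewrite /Q /P /Ptau /Qtau /Rg /Sg.
  move: (galpha k0 k1 kinf th) (sqp q p) hA hB => al S hA' hB'.
  have := hsij j hj; have := hsji j hj; have := hu j; have := hu i.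
  have := hs0 j; have := hs0 i; have := hp0 j; have := hp0 i.
  move: (q i) (q j) (p i) (p j) (s i) (s j) (th i) (th j) => qi qj pi pj si sj ti tj.
  move=> Hpi Hpj Hsi Hsj Hui Huj Hsji Hsij.
  field.
  by rewrite ?Hpi ?Hpj ?Hsi ?Hsj ?Hui ?Huj ?Hsji ?Hsij ?hA' ?hB'.
have e3 : \sum_(j < N | j != i) Rg s i j * Q j * P j * (Q i * P i - - th i)
        = \sum_(j < N | j != i) Rg s i j * q j * p j * (q i * p i - th i).
  apply: eq_bigr => j hj; rewrite /Q /P /Ptau /Qtau /Rg /Sg.
  move: (galpha k0 k1 kinf th) (sqp q p) hA hB => al S hA' hB'.
  have := hsij j hj; have := hsji j hj; have := hu j; have := hu i.
  have := hs0 j; have := hs0 i; have := hp0 j; have := hp0 i.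
  move: (q i) (q j) (p i) (p j) (s i) (s j) (th i) (th j) => qi qj pi pj si sj ti tj.
  move=> Hpi Hpj Hsi Hsj Hui Huj Hsji Hsij.
  field.
  by rewrite ?Hpi ?Hpj ?Hsi ?Hsj ?Hui ?Huj ?Hsji ?Hsij ?hA' ?hB'.
have e4 : \sum_(j < N | j != i) Rg s i j * Q i * P i * (Q j * P j - - th j)
        = \sum_(j < N | j != i) Rg s i j * q i * p i * (q j * p j - th j).
  apply: eq_bigr => j hj; rewrite /Q /P /Ptau /Qtau /Rg /Sg.
  move: (galpha k0 k1 kinf th) (sqp q p) hA hB => al S hA' hB'.
  have := hsij j hj; have := hsji j hj; have := hu j; have := hu i.
  have := hs0 j; have := hs0 i; have := hp0 j; have := hp0 i.
  move: (q i) (q j) (p i) (p j) (s i) (s j) (th i) (th j) => qi qj pi pj si sj ti tj.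
  move=> Hpi Hpj Hsi Hsj Hui Huj Hsji Hsij.
  field.
  by rewrite ?Hpi ?Hpj ?Hsi ?Hsj ?Hui ?Huj ?Hsji ?Hsij ?hA' ?hB'.
rewrite e1 e2 e3 e4 /Q /P /Ptau /Qtau.
move: (\sum_(j < N | j != i) _) (\sum_(j < N | j != i) _)
      (\sum_(j < N | j != i) _) (\sum_(j < N | j != i) _) => X1 X2 X3 X4.
move: (galpha k0 k1 kinf th) (sqp q p) hA hB => al S hA' hB'.
have := hu i; have := hs0 i; have := hs1 i; have := hp0 i.
move: (q i) (p i) (s i) (th i) => qi pi si ti.
move=> Hpi Hs1 Hsi Hui.
rewrite -subr_eq0 in Hs1.
field.
by rewrite ?Hpi ?Hsi ?Hs1 ?Hui ?hA' ?hB'.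
Qed.

Unset Implicit Arguments.
(* The 2-form identity (i)
   is stated componentwise: for every pair of coordinates (c,j), (d,k) of
   (q,p,s)-space, at every point where all the rational functions involved
   are defined (s_i <> 0, 1, s_i pairwise distinct, both factors of the
   denominator of Q_i nonzero, Q_i <> 0). *)
Theorem theorem1p3 (R : realType) (N : nat)
    (k0 k1 kinf : R[i]) (th : 'I_N -> R[i]) (x : pt R[i] N) :
  (forall i, xs x i != 0) ->
  (forall i, xs x i != 1) ->
  (forall i j, i != j -> xs x i != xs x j) ->
  galpha k0 k1 kinf th + sqp (xq x) (xp x) != 0 ->
  galpha k0 k1 kinf th + kinf + sqp (xq x) (xp x) != 0 ->
  (forall i, xp x i != 0) ->
  (forall i, xq x i * xp x i != th i) ->
  (* (i) equality of the 2-forms *)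
  (forall (c : 'I_3) (j : 'I_N) (d : 'I_3) (k : 'I_N),
     \sum_(i < N)
        (wedge (fun y => xp y i) (fun y => xq y i) c j d k x
         - wedge (fun y => Ham k0 k1 kinf th (xq y) (xp y) (xs y) i)
                 (fun y => xs y i) c j d k x)
   = \sum_(i < N)
        (wedge (fun y => Ptau k0 k1 kinf th (xq y) (xp y) (xs y) i)
               (fun y => Qtau k0 k1 kinf th (xq y) (xp y) (xs y) i) c j d k x
         - wedge (fun y => Htilde k0 k1 kinf th (xq y) (xp y) (xs y) i)
                 (fun y => xs y i) c j d k x))
  /\
  (* (ii) tilde H_i = H_i(Q, P, s; R_tau(kappa)) *)
  (forall i : 'I_N,
     Htilde k0 k1 kinf th (xq x) (xp x) (xs x) i
     = Ham (1 - k0) (1 - k1) (- kinf) (fun j => - th j)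
           (Qtau k0 k1 kinf th (xq x) (xp x) (xs x))
           (Ptau k0 k1 kinf th (xq x) (xp x) (xs x)) (xs x) i).
Proof.
move=> hs0 hs1 hsd hA hB hp0 huth; split.
  exact: part1.
exact: part2.
Qed.
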